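(* Assume that for each $r\in\mathbb{N}$ the operator $L_r:Lip_d(I)\to Lip_d(I)$ is Lipschitz with Lipschitz constant $|L_r|$, and $|L|:=\sup_{r\in\mathbb{N}}|L_r|<\infty$. Then the non-stationary fractal operator $\mathfrak{F}^\alpha_b:Lip_d(I)\to C(I)$, $\mathfrak{F}^\alpha_b(f)=f^\alpha_b$, is Lipschitz and its Lipschitz constant satisfies $$|\mathfrak{F}^\alpha_b|\le\frac{1+|L|\,\|\alpha\|_\infty}{1-\|\alpha\|_\infty}.$$
   Context: Setting: $I=[x_0,x_N]$ with partition $\Delta: x_0<x_1<\dots<x_N$, $I_i=[x_{i-1},x_i]$, $l_i:I\to I_i$ the increasing affine bijection $l_i(x)=\frac{x_i-x_{i-1}}{x_N-x_0}x+\frac{x_Nx_{i-1}-x_0x_i}{x_N-x_0}$, and $Q_i=l_i^{-1}$. Scaling functions $\alpha_{i,r}:I\to\mathbb{R}$ ($i=1,\dots,N$, $r\in\mathbb{N}$) are continuous with $\|\alpha\|_\infty:=\sup_{r}\max_i\|\alpha_{i,r}\|_\infty<1$. $Lip_d(I)$ ($0<d\le1$) is the space of real functions $g$ on $I$ with $\sup_{x\ne y}|g(x)-g(y)|/|x-y|^d<\infty$, regarded as a subset of $C(I)$ with the supremum norm; Lipschitz properties of operators refer to the supremum norm (an operator $\mathcal{T}$ is Lipschitz if $\|\mathcal{T}u-\mathcal{T}v\|\le q\|u-v\|$ for some $q>0$ and all $u,v$; the best such $q$ is its Lipschitz constant $|\mathcal{T}|$). $L_r:Lip_d(I)\to Lip_d(I)$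 are operators (not necessarily linear) with $(L_rg)(x_0)=g(x_0)$, $(L_rg)(x_N)=g(x_N)$ for all $g$, and $\sup_r\|L_r\|_\infty<\infty$, where $\|L_r\|_\infty=\sup_{g\ne0}\|L_rg\|_\infty/\|g\|_\infty$. Non-stationary $\alpha$-fractal function: for $f\in C(I)$ and base functions $b_r\in C(I)$ with $b_r(x_0)=f(x_0)$, $b_r(x_N)=f(x_N)$, $\sup_r\|b_r\|_\infty<\infty$, let $C_f(I)=\{g\in C(I):g(x_0)=f(x_0),g(x_N)=f(x_N)\}$ and $T^{\alpha_r}:C_f(I)\to C_f(I)$, $(T^{\alpha_r}g)(x)=f(x)+\alpha_{i,r}(Q_i(x))(g-b_r)(Q_i(x))$ for $x\in I_i$. For every $g\in C_f(I)$, $T^{\alpha_1}\circ\cdots\circ T^{\alpha_r}g$ converges uniformly to a function independent of $g$; this is the non-stationary $\alpha$-fractal function. $f^\alpha_b$ denotes it for $f\in Lip_d(I)$ with $b_r=L_rf$. *)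

(* Defs.v *)
From Stdlib Require Import Reals.
From Coquelicot Require Import Coquelicot.
Open Scope R_scope.

Definition inI (a b x : R) : Prop := a <= x <= b.

Definition supnorm (a b : R) (g : R -> R) : R :=
  real (Lub_Rbar (fun y => exists x, inI a b x /\ y = Rabs (g x))).

Definition cont_on (a b : R) (g : R -> R) : Prop :=
  forall x, inI a b x -> forall eps, 0 < eps -> exists delta, 0 < delta /\
    forall y, inI a b y -> Rabs (y - x) < delta -> Rabs (g y - g x) < eps.

Definition LipD (a b d : R) (g : R -> R) : Prop :=
  exists C, forall x y, inI a b x -> inI a b y -> x <> y ->
    Rabs (g x - g y) <= C * Rpower (Rabs (x - y)) d.

Definition lipschitz_bound (a b : R) (P : (R -> R) -> Prop)
    (T : (R -> R) -> (R -> R)) (q : R) : Prop :=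
  forall u v, P u -> P v ->
    supnorm a b (fun x => T u x - T v x) <= q * supnorm a b (fun x => u x - v x).

Definition IsLipConst (a b : R) (P : (R -> R) -> Prop)
    (T : (R -> R) -> (R -> R)) (q : R) : Prop :=
  0 <= q /\ lipschitz_bound a b P T q /\
  (forall q', 0 <= q' -> lipschitz_bound a b P T q' -> q <= q').

(* Affine maps l_i : I -> I_i and their inverses Q_i (xs = partition,
   N = number of subintervals, x_0 = xs 0, x_N = xs N). *)
Definition l_map (xs : nat -> R) (N i : nat) (x : R) : R :=
  (xs i - xs (i - 1)%nat) / (xs N - xs 0%nat) * x
  + (xs N * xs (i - 1)%nat - xs 0%nat * xs i) / (xs N - xs 0%nat).

Definition Q_map (xs : nat -> R) (N i : nat) (y : R) : R :=
  ((xs N - xs 0%nat) * y - (xs N * xs (i - 1)%nat - xs 0%nat * xs i))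
  / (xs i - xs (i - 1)%nat).

Fixpoint cnt_below (xs : nat -> R) (x : R) (k : nat) : nat :=
  match k with
  | O => O
  | S k' => (cnt_below xs x k' + (if Rlt_dec (xs (S k')) x then 1 else 0))%nat
  end.

(* For x in I, the index i in 1..N with x in I_i = [x_{i-1}, x_i]
   (the smallest such i; at interior nodes both choices agree on C_f(I)). *)
Definition seg_idx (xs : nat -> R) (N : nat) (x : R) : nat :=
  S (cnt_below xs x (N - 1)).

(* The operator T^{alpha_r}; alpha i r = alpha_{i,r+1}, bs r = b_{r+1}. *)
Definition T_op (xs : nat -> R) (N : nat) (alpha : nat -> nat -> R -> R)
    (f : R -> R) (bs : nat -> R -> R) (r : nat) (g : R -> R) : R -> R :=
  fun x => let i := seg_idx xs N x in
    f x + alpha i r (Q_map xs N i x) * (g (Q_map xs N i x) - bs r (Q_map xs N i x)).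

Fixpoint comp_T (T : nat -> (R -> R) -> (R -> R)) (n k : nat) (g : R -> R)
    : R -> R :=
  match k with
  | O => g
  | S k' => T n (comp_T T (S n) k' g)
  end.

(* Non-stationary alpha-fractal function f^alpha_b with b_r = L_r f:
   the limit of T^{alpha_1} o ... o T^{alpha_r} g, taken with g = f. *)
Definition fractal (xs : nat -> R) (N : nat) (alpha : nat -> nat -> R -> R)
    (L : nat -> (R -> R) -> (R -> R)) (f : R -> R) : R -> R :=
  fun x => real (Lim_seq (fun r =>
    comp_T (T_op xs N alpha f (fun r => L r f)) 0 r f x)).

(* Main.v *)
Require Import Defs.
From Stdlib Require Import Reals Lra Lia.
From Coquelicot Require Import Coquelicot.
Open Scope R_scope.

Lemma LimSup_shift (v : nat -> R) (K : R) :
  LimSup_seq (fun n => v n + K) = Rbar_plus (LimSup_seq v) K.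
Proof.
  destruct (ex_LimSup_seq v) as [l Hl].
  rewrite (is_LimSup_seq_unique _ _ Hl).
  apply is_LimSup_seq_unique.
  destruct l as [l| |]; simpl in *.
  - intros eps. destruct (Hl eps) as [H1 [N H2]]. split.
    + intros N'. destruct (H1 N') as [n [Hn1 Hn2]]. exists n. split; [auto|lra].
    + exists N. intros n Hn. specialize (H2 n Hn). lra.
  - intros M N. destruct (Hl (M - K) N) as [n [Hn1 Hn2]]. exists n. split; [auto|lra].
  - intros M. destruct (Hl (M - K)) as [N HN]. exists N. intros n Hn.
    specialize (HN n Hn). lra.
Qed.

Lemma LimInf_shift (v : nat -> R) (K : R) :
  LimInf_seq (fun n => v n + K) = Rbar_plus (LimInf_seq v) K.
Proof.
  destruct (ex_LimInf_seq v) as [l Hl].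
  rewrite (is_LimInf_seq_unique _ _ Hl).
  apply is_LimInf_seq_unique.
  destruct l as [l| |]; simpl in *.
  - intros eps. destruct (Hl eps) as [H1 [N H2]]. split.
    + intros N'. destruct (H1 N') as [n [Hn1 Hn2]]. exists n. split; [auto|lra].
    + exists N. intros n Hn. specialize (H2 n Hn). lra.
  - intros M. destruct (Hl (M - K)) as [N HN]. exists N. intros n Hn.
    specialize (HN n Hn). lra.
  - intros M N. destruct (Hl (M - K) N) as [n [Hn1 Hn2]]. exists n. split; [auto|lra].
Qed.

Lemma Lim_close (u v : nat -> R) (K : R) : 0 <= K ->
  (forall n, Rabs (u n - v n) <= K) ->
  Rabs (real (Lim_seq u) - real (Lim_seq v)) <= K.
Proof.
  intros HK H.
  assert (H1 : forall n, u n <= v n + K).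
  { intros n. specialize (H n). apply Rabs_le_between in H. lra. }
  assert (H2 : forall n, v n <= u n + K).
  { intros n. specialize (H n). apply Rabs_le_between in H. lra. }
  assert (A1 := LimSup_le u (fun n => v n + K) (ex_intro _ 0%nat (fun n _ => H1 n))).
  assert (A2 := LimSup_le v (fun n => u n + K) (ex_intro _ 0%nat (fun n _ => H2 n))).
  assert (A3 := LimInf_le u (fun n => v n + K) (ex_intro _ 0%nat (fun n _ => H1 n))).
  assert (A4 := LimInf_le v (fun n => u n + K) (ex_intro _ 0%nat (fun n _ => H2 n))).
  rewrite LimSup_shift in A1, A2. rewrite LimInf_shift in A3, A4.
  unfold Lim_seq.
  destruct (LimSup_seq u) as [a| |], (LimSup_seq v) as [b| |],
    (LimInf_seq u) as [c| |], (LimInf_seq v) as [e| |];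
    simpl in *; try contradiction;
    try (rewrite Rminus_diag, Rabs_R0; lra);
    try (apply Rabs_le_between; split; lra).
Qed.

Lemma sup_ub a b h M : (forall x, inI a b x -> Rabs (h x) <= M) ->
  forall x, inI a b x -> Rabs (h x) <= supnorm a b h.
Proof.
  intros HM x Hx. unfold supnorm.
  destruct (Lub_Rbar_correct (fun y => exists x, inI a b x /\ y = Rabs (h x))) as [Hub Hl].
  assert (E1 := Hub (Rabs (h x)) (ex_intro _ x (conj Hx eq_refl))).
  assert (E2 : Rbar_le (Lub_Rbar (fun y => exists x, inI a b x /\ y = Rabs (h x))) M).
  { apply Hl. intros y [z [Hz ->]]. simpl. apply HM; auto. }
  destruct (Lub_Rbar _); simpl in *; tauto.
Qed.

Lemma sup_le a b h C : 0 <= C -> (forall x, inI a b x -> Rabs (h x) <= C) ->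
  supnorm a b h <= C.
Proof.
  intros HC HM. unfold supnorm.
  destruct (Lub_Rbar_correct (fun y => exists x, inI a b x /\ y = Rabs (h x))) as [Hub Hl].
  assert (E2 : Rbar_le (Lub_Rbar (fun y => exists x, inI a b x /\ y = Rabs (h x))) C).
  { apply Hl. intros y [z [Hz ->]]. simpl. apply HM; auto. }
  destruct (Lub_Rbar _); simpl in *; try tauto; lra.
Qed.

Lemma sup_nonneg a b h : a <= b -> 0 <= supnorm a b h.
Proof.
  intros Hab. unfold supnorm.
  destruct (Lub_Rbar_correct (fun y => exists x, inI a b x /\ y = Rabs (h x))) as [Hub Hl].
  assert (Ha : inI a b a) by (unfold inI; lra).
  assert (E1 := Hub (Rabs (h a)) (ex_intro _ a (conj Ha eq_refl))).
  destruct (Lub_Rbar _); simpl in *; try tauto; try lra.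
  pose proof (Rabs_pos (h a)). lra.
Qed.

Lemma Lip_bdd a b d g : a <= b -> 0 < d -> LipD a b d g ->
  exists M, forall x, inI a b x -> Rabs (g x) <= M.
Proof.
  intros Hab Hd [C HC].
  exists (Rabs (g a) + Rabs C * Rpower (b - a) d).
  assert (Hp : 0 < Rpower (b - a) d) by (unfold Rpower; apply exp_pos).
  assert (Ha : inI a b a) by (unfold inI; lra).
  intros x Hx. destruct (Req_dec x a) as [->|Hne].
  - pose proof (Rabs_pos C). nra.
  - specialize (HC x a Hx Ha Hne).
    assert (Hq : Rpower (Rabs (x - a)) d <= Rpower (b - a) d).
    { apply Rle_Rpower_l; [lra|]. unfold inI in Hx.
      split; [apply Rabs_pos_lt; lra| rewrite Rabs_right; lra]. }
    assert (Hq0 : 0 < Rpower (Rabs (x - a)) d) by (unfold Rpower; apply exp_pos).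
    assert (C * Rpower (Rabs (x - a)) d <= Rabs C * Rpower (b - a) d).
    { apply Rle_trans with (Rabs C * Rpower (Rabs (x - a)) d).
      - apply Rmult_le_compat_r; [lra| apply Rle_abs].
      - apply Rmult_le_compat_l; [apply Rabs_pos| lra]. }
    pose proof (Rabs_triang_inv (g x) (g a)). lra.
Qed.

Section Seg.
Variable xs : nat -> R.
Variable N : nat.
Hypothesis HN : (0 < N)%nat.
Hypothesis Hxs : forall i, (i < N)%nat -> xs i < xs (S i).

Lemma xs_mono : forall i j, (i <= j <= N)%nat -> xs i <= xs j.
Proof.
  intros i j; induction j as [|j IH]; intros H.
  - replace i with 0%nat by lia. lra.
  - destruct (Nat.eq_dec i (S j)) as [->|Hne]; [lra|].
    assert (xs j < xs (S j)) by (apply Hxs; lia).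
    assert (xs i <= xs j) by (apply IH; lia). lra.
Qed.

Lemma cnt_prop x : forall k, (k <= N - 1)%nat ->
  (cnt_below xs x k <= k)%nat /\ (cnt_below xs x k = 0%nat \/ xs (cnt_below xs x k) < x)
  /\ (cnt_below xs x k = k \/ x <= xs (S (cnt_below xs x k))).
Proof.
  induction k as [|k IH]; intros Hk.
  - simpl. lia.
  - destruct (IH ltac:(lia)) as [A [B C]]. simpl.
    destruct (Rlt_dec (xs (S k)) x) as [Hl|Hl].
    + assert (E : cnt_below xs x k = k).
      { destruct C as [C|C]; auto.
        assert (xs (S (cnt_below xs x k)) <= xs (S k)) by (apply xs_mono; lia). lra. }
      rewrite E. replace (k + 1)%nat with (S k) by lia. split; [lia|]. split; [right; auto|left; auto].
    + rewrite Nat.add_0_r. split; [lia|]. split; [auto|].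
      destruct C as [C|C]; [right; rewrite C; lra| right; auto].
Qed.

Lemma seg_prop x : inI (xs 0%nat) (xs N) x ->
  (1 <= seg_idx xs N x <= N)%nat /\ xs (seg_idx xs N x - 1)%nat <= x <= xs (seg_idx xs N x).
Proof.
  intros [H0 H1]. unfold seg_idx.
  destruct (cnt_prop x (N - 1) (le_n _)) as [A [B C]].
  set (c := cnt_below xs x (N - 1)) in *.
  replace (S c - 1)%nat with c by lia.
  split; [lia|]. split.
  - destruct B as [B|B]; [rewrite B; lra| lra].
  - destruct C as [C|C]; [|auto]. rewrite C. replace (S (N - 1)) with N by lia. lra.
Qed.

Lemma Q_in x : inI (xs 0%nat) (xs N) x ->
  inI (xs 0%nat) (xs N) (Q_map xs N (seg_idx xs N x) x).
Proof.
  intros Hx. destruct (seg_prop x Hx) as [Hi [Hl Hr]].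
  set (i := seg_idx xs N x) in *.
  assert (Hd : xs (i - 1)%nat < xs i).
  { replace i with (S (i - 1)) at 2 by lia. apply Hxs. lia. }
  assert (H0N : xs 0%nat <= xs N) by (apply xs_mono; lia).
  set (t := (x - xs (i - 1)%nat) / (xs i - xs (i - 1)%nat)).
  assert (E : Q_map xs N i x = xs 0%nat + (xs N - xs 0%nat) * t).
  { unfold Q_map, t. field. lra. }
  assert (Ht0 : 0 <= t).
  { unfold t. apply Rdiv_le_0_compat; lra. }
  assert (Ht1 : t <= 1).
  { unfold t. apply Rmult_le_reg_r with (xs i - xs (i - 1)%nat); [lra|].
    unfold Rdiv. rewrite Rmult_assoc, Rinv_l; lra. }
  rewrite E. unfold inI. split; nra.
Qed.
End Seg.

Theorem mainTheorem4
  (xs : nat -> R) (N : nat) (d : R)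
  (alpha : nat -> nat -> R -> R) (L : nat -> (R -> R) -> (R -> R))
  (anorm : R) (Lc : nat -> R) (Lsup : R)
  (HN : (0 < N)%nat)
  (Hxs : forall i, (i < N)%nat -> xs i < xs (S i))
  (Hd : 0 < d <= 1)
  (Halpha_cont : forall i r, (1 <= i <= N)%nat -> cont_on (xs 0%nat) (xs N) (alpha i r))
  (Hanorm : is_lub (fun y => exists i r x, (1 <= i <= N)%nat /\ inI (xs 0%nat) (xs N) x
                                /\ y = Rabs (alpha i r x)) anorm)
  (Hanorm1 : anorm < 1)
  (HLlip : forall r g, LipD (xs 0%nat) (xs N) d g -> LipD (xs 0%nat) (xs N) d (L r g))
  (HLend : forall r g, LipD (xs 0%nat) (xs N) d g ->
      L r g (xs 0%nat) = g (xs 0%nat) /\ L r g (xs N) = g (xs N))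
  (HLbdd : exists M, forall r g, LipD (xs 0%nat) (xs N) d g ->
      supnorm (xs 0%nat) (xs N) g <> 0 ->
      supnorm (xs 0%nat) (xs N) (L r g) <= M * supnorm (xs 0%nat) (xs N) g)
  (HLc : forall r, IsLipConst (xs 0%nat) (xs N) (LipD (xs 0%nat) (xs N) d) (L r) (Lc r))
  (HLsup : is_lub (fun y => exists r, y = Lc r) Lsup) :
  exists q, IsLipConst (xs 0%nat) (xs N) (LipD (xs 0%nat) (xs N) d)
              (fractal xs N alpha L) q
         /\ q <= (1 + Lsup * anorm) / (1 - anorm).
Proof.
  set (a := xs 0%nat). set (b := xs N).
  assert (Hab : a <= b) by (apply (xs_mono xs N HN Hxs); lia).
  assert (Ha0 : 0 <= anorm).
  { destruct Hanorm as [Hu _].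
    assert (Hai : inI a b a) by (unfold inI; lra).
    assert (Rabs (alpha 1%nat 0%nat a) <= anorm).
    { apply Hu. exists 1%nat, 0%nat, a. split; [lia|]. split; auto. }
    pose proof (Rabs_pos (alpha 1%nat 0%nat a)). lra. }
  assert (HLcle : forall r, Lc r <= Lsup).
  { intros r. destruct HLsup as [Hu _]. apply Hu. exists r; auto. }
  assert (HL0 : 0 <= Lsup).
  { destruct (HLc 0%nat) as [H0 _]. specialize (HLcle 0%nat). lra. }
  set (B := (1 + Lsup * anorm) / (1 - anorm)).
  assert (HB : B * (1 - anorm) = 1 + Lsup * anorm) by (unfold B; field; lra).
  assert (HB1 : 1 <= B).
  { apply Rmult_le_reg_r with (1 - anorm); [lra|]. rewrite HB. nra. }
  assert (Hlip : lipschitz_bound a b (LipD a b d) (fractal xs N alpha L) B).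
  { intros u v Hu Hv.
    set (s := supnorm a b (fun x => u x - v x)).
    assert (Hs0 : 0 <= s) by (apply sup_nonneg; auto).
    assert (Hbd : forall g h, LipD a b d g -> LipD a b d h ->
       forall x, inI a b x -> Rabs (g x - h x) <= supnorm a b (fun x => g x - h x)).
    { intros g h Hg Hh. destruct (Lip_bdd a b d g Hab (proj1 Hd) Hg) as [Mg HMg].
      destruct (Lip_bdd a b d h Hab (proj1 Hd) Hh) as [Mh HMh].
      apply (sup_ub a b _ (Mg + Mh)). intros x Hx.
      specialize (HMg x Hx). specialize (HMh x Hx).
      pose proof (Rabs_triang (g x) (- h x)). rewrite Rabs_Ropp in H. unfold Rminus. lra. }
    set (Tu := T_op xs N alpha u (fun r => L r u)).
    set (Tv := T_op xs N alpha v (fun r => L r v)).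
    assert (Hmain : forall k n x, inI a b x ->
       Rabs (comp_T Tu n k u x - comp_T Tv n k v x) <= B * s).
    { induction k as [|k IH]; intros n x Hx.
      - simpl. specialize (Hbd u v Hu Hv x Hx). fold s in Hbd. nra.
      - simpl. unfold Tu at 1, Tv at 1, T_op. cbv zeta.
        fold Tu Tv.
        set (i := seg_idx xs N x). set (y := Q_map xs N i x).
        assert (Hy : inI a b y) by (apply Q_in; auto).
        assert (Hal : Rabs (alpha i n y) <= anorm).
        { destruct Hanorm as [Hub _]. apply Hub.
          destruct (seg_prop xs N HN Hxs x Hx) as [Hi _].
          exists i, n, y. split; auto. }
        assert (H1 := IH (S n) y Hy).
        assert (H2 : Rabs (L n u y - L n v y) <= Lsup * s).
        { apply Rle_trans with (supnorm a b (fun x => L n u x - L n v x)).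
          - apply Hbd; auto.
          - destruct (HLc n) as [_ [Hlb _]].
            apply Rle_trans with (Lc n * s); [apply Hlb; auto|].
            apply Rmult_le_compat_r; auto. }
        assert (H3 := Hbd u v Hu Hv x Hx). fold s in H3.
        set (g1 := comp_T Tu (S n) k u y) in *.
        set (h1 := comp_T Tv (S n) k v y) in *.
        replace (u x + alpha i n y * (g1 - L n u y) - (v x + alpha i n y * (h1 - L n v y)))
          with ((u x - v x) + alpha i n y * ((g1 - h1) - (L n u y - L n v y))) by ring.
        eapply Rle_trans; [apply Rabs_triang|].
        rewrite Rabs_mult.
        assert (Rabs ((g1 - h1) - (L n u y - L n v y)) <= B * s + Lsup * s).
        { unfold Rminus at 1. eapply Rle_trans; [apply Rabs_triang|].
          rewrite Rabs_Ropp. lra. }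
        assert (Rabs (alpha i n y) * Rabs ((g1 - h1) - (L n u y - L n v y))
                <= anorm * (B * s + Lsup * s)).
        { apply Rmult_le_compat; auto using Rabs_pos. }
        assert (E : s + anorm * (B * s + Lsup * s) = B * s).
        { transitivity (s * (1 + Lsup * anorm) + anorm * B * s); [ring|].
          rewrite <- HB. ring. }
        lra. }
    apply sup_le; [nra|].
    intros x Hx. unfold fractal. apply Lim_close; [nra|].
    intros n. apply Hmain; auto. }
  set (S := fun q => 0 <= q /\ lipschitz_bound a b (LipD a b d) (fractal xs N alpha L) q).
  destruct (Glb_Rbar_correct S) as [Hlb Hgl].
  assert (G0 : Rbar_le 0 (Glb_Rbar S)).
  { apply Hgl. intros q [Hq _]. simpl. auto. }
  assert (GB : Rbar_le (Glb_Rbar S) B).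
  { apply Hlb. split; auto. lra. }
  destruct (Glb_Rbar S) as [g| |] eqn:Eg; simpl in G0, GB; try contradiction.
  exists g. split; [|auto].
  split; [auto|]. split.
  - intros u v Hu Hv.
    set (s := supnorm a b (fun x => u x - v x)).
    assert (Hs0 : 0 <= s) by (apply sup_nonneg; auto).
    destruct (Req_dec s 0) as [Hs|Hs].
    + specialize (Hlip u v Hu Hv). fold s in Hlip. rewrite Hs in *. lra.
    + set (t := supnorm a b (fun x => fractal xs N alpha L u x - fractal xs N alpha L v x)).
      assert (Hlow : Rbar_le (t / s) g).
      { apply Hgl. intros q [Hq Hq']. simpl.
        specialize (Hq' u v Hu Hv). fold s t in Hq'.
        apply Rmult_le_reg_r with s; [lra|]. unfold Rdiv.
        rewrite Rmult_assoc, Rinv_l; lra. }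
      simpl in Hlow.
      apply Rmult_le_compat_r with (r := s) in Hlow; [|lra].
      unfold Rdiv in Hlow. rewrite Rmult_assoc, Rinv_l in Hlow; lra.
  - intros q' Hq' Hb. specialize (Hlb q' (conj Hq' Hb)). simpl in Hlb. auto.
Qed.
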